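(* Consider the coordination game ($\mathcal V_c=\mathcal V$). (1) If $x^*$ is a Nash equilibrium and $z^*=z(x^* )$, then $z^*=F_c\!\left(\frac{n}{n-1}(z^*-\epsilon_c)\right)$ for every $\epsilon_c\in(0,\tfrac1n]$. (2) Conversely, if $z^*\in\{0,\tfrac1n,\dots,1\}$ satisfies $z^*=F_c\!\left(\frac{n}{n-1}(z^*-\epsilon_c)\right)$ for every $\epsilon_c\in(0,\tfrac1n]$, then there exists a Nash equilibrium $x^*$ with $z(x^* )=z^*$.
   Context: Let $\mathcal V$ be a finite set of $n\ge2$ agents, all coordinating. Given real weights $d_i$, the coordination game has action set $\{-1,+1\}$, configuration space $\mathcal X=\{-1,+1\}^{\mathcal V}$ and utilities $u_i(x)=\sum_{j\neq i}x_ix_j-d_ix_i$. A (pure) Nash equilibrium is an $x\in\mathcal X$ with $u_i(x)\ge u_i(y_i,x_{-i})$ for all $i$ and $y_i\in\{-1,+1\}$. Thresholds: $r_i=\tfrac12+\tfrac{d_i}{2(n-1)}$. For $x\in\mathcal X$, $z(x)=\frac1n|\{i: x_i=+1\}|$. The threshold CDF is $F_c(t)=\frac1n|\{i\in\mathcal V: r_i\le t\}|$, $t\in\mathbb R$. *)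

(* Defs.v *)
(* Reals are an arbitrary realFieldType R (the statement is
   purely order-theoretic/algebraic, so this generalizes the real numbers). *)
From HB Require Import structures.
From mathcomp Require Import all_boot all_order all_algebra.
Set Implicit Arguments. Unset Strict Implicit. Unset Printing Implicit Defensive.
Import Order.TTheory GRing.Theory Num.Theory.
Local Open Scope ring_scope.

Definition act (R : realFieldType) (b : bool) : R := if b then 1 else -1.

Definition config (n : nat) := {ffun 'I_n -> bool}.

Definition deviate (n : nat) (x : config n) (i : 'I_n) (y : bool) : config n :=
  [ffun j => if j == i then y else x j].

Definition utility (R : realFieldType) (n : nat) (d : 'I_n -> R)
    (i : 'I_n) (x : config n) : R :=
  \sum_(j < n | j != i) act R (x i) * act R (x j) - d i * act R (x i).

Definition nash (R : realFieldType) (n : nat) (d : 'I_n -> R) (x : config n) : Prop :=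
  forall (i : 'I_n) (y : bool), utility d i (deviate x i y) <= utility d i x.

Definition threshold (R : realFieldType) (n : nat) (d : 'I_n -> R) (i : 'I_n) : R :=
  2^-1 + d i / (2 * (n%:R - 1)).

Definition zfrac (R : realFieldType) (n : nat) (x : config n) : R :=
  #|[set i | x i]|%:R / n%:R.

Definition Fc (R : realFieldType) (n : nat) (d : 'I_n -> R) (t : R) : R :=
  #|[set i | threshold d i <= t]|%:R / n%:R.

(* Main.v *)
Require Import Defs.
From HB Require Import structures.
From mathcomp Require Import all_boot all_order all_algebra.
From mathcomp Require Import ring lra.
Import Order.TTheory GRing.Theory Num.Theory.
Local Open Scope ring_scope.

Lemma sum_act (R : realFieldType) n (x : config n) :
  \sum_(j < n) act R (x j) = 2 * #|[set i | x i]|%:R - n%:R.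
Proof.
rewrite (bigID (fun j => x j)) /=.
rewrite (eq_bigr (fun _ => 1)); last by move=> j ->.
rewrite [X in _ + X](eq_bigr (fun _ => -1)); last by move=> j /negbTE ->.
rewrite !sumr_const.
have E1 : #|(fun j : 'I_n => x j)| = #|[set i | x i]| by apply: eq_card => j; rewrite inE.
have E2 : #|(fun i : 'I_n => ~~ x i)| = #|~: [set i | x i]| by apply: eq_card => j; rewrite !inE.
rewrite E1 E2.
have := cardsC [set i | x i]; rewrite card_ord.
move: #|[set i | x i]| #|~: [set i | x i]| => a b E.
clear E1 E2; subst n. rewrite natrD -mulr_natr. ring.
Qed.
Lemma util_dev (R : realFieldType) n (d : 'I_n -> R) (x : config n) i y :
  utility d i (deviate x i y) = act R y * (\sum_(j < n | j != i) act R (x j) - d i).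
Proof.
rewrite /utility mulrBr mulr_sumr /deviate ffunE eqxx; congr (_ - _).
  by apply: eq_bigr => j /negbTE hj; rewrite ffunE hj.
by rewrite mulrC.
Qed.

Lemma util_x (R : realFieldType) n (d : 'I_n -> R) (x : config n) i :
  utility d i x = act R (x i) * (\sum_(j < n | j != i) act R (x j) - d i).
Proof.
rewrite /utility mulrBr mulr_sumr; congr (_ - _). by rewrite mulrC.
Qed.

Lemma S_eq (R : realFieldType) n (x : config n) i :
  \sum_(j < n | j != i) act R (x j) = 2 * #|[set i | x i]|%:R - n%:R - act R (x i).
Proof. rewrite -sum_act [X in _ = X - _](bigD1 i) //=; by rewrite addrC addrK. Qed.

Lemma nashP (R : realFieldType) n (d : 'I_n -> R) (x : config n) :
  nash d x <-> forall i, if x i then d i <= 2 * #|[set i | x i]|%:R - n%:R - 1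
                          else 2 * #|[set i | x i]|%:R - n%:R + 1 <= d i.
Proof.
split.
  move=> H i; have := H i (~~ x i); rewrite util_dev util_x S_eq.
  case: (x i) => /=; rewrite /act; lra.
move=> H i y; rewrite util_dev util_x S_eq; have := H i.
case: (x i); case: y; rewrite /act; lra.
Qed.

Lemma thrP (R : realFieldType) n (hn : (2 <= n)%N) (d : 'I_n -> R) i (c e : R) :
  (threshold d i <= n%:R/(n%:R-1)*(c/n%:R - e)) =
  (d i <= 2*(c - n%:R*e) - (n%:R-1)).
Proof.
have hn2 : (2%:R <= n%:R :> R) by rewrite ler_nat.
have mpos : 0 < 2 * (n%:R - 1 : R) by lra.
have m0 : (n%:R - 1 : R) != 0 by rewrite gt_eqF //; lra.
have n0 : (n%:R : R) != 0 by rewrite gt_eqF //; lra.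
rewrite -(ler_pM2l mpos).
have -> : 2 * (n%:R - 1) * threshold d i = (n%:R - 1) + d i.
  by rewrite /threshold; field; rewrite m0.
have -> : 2 * (n%:R - 1) * (n%:R / (n%:R - 1) * (c / n%:R - e)) = 2*(c - n%:R*e).
  by field; rewrite n0 m0.
by rewrite lerBrDl.
Qed.

Lemma eps_bound (R : realFieldType) n (hn : (2 <= n)%N) (eps : R) :
  0 < eps -> eps <= n%:R^-1 -> 0 < n%:R * eps /\ n%:R * eps <= 1.
Proof.
move=> e0 e1; have n0 : (0 : R) < n%:R by rewrite ltr0n; case: (n) hn.
split; first by rewrite mulr_gt0.
have := ler_wpM2l (ltW n0) e1; by rewrite mulfV // gt_eqF.
Qed.

Theorem corollary1 (R : realFieldType) (n : nat) (hn : (2 <= n)%N) (d : 'I_n -> R) :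
  (forall x : config n, nash d x ->
     forall eps : R, 0 < eps -> eps <= n%:R^-1 ->
       zfrac R x = Fc d (n%:R / (n%:R - 1) * (zfrac R x - eps)))
  /\
  (forall k : nat, (k <= n)%N ->
     (forall eps : R, 0 < eps -> eps <= n%:R^-1 ->
        k%:R / n%:R = Fc d (n%:R / (n%:R - 1) * (k%:R / n%:R - eps))) ->
     exists x : config n, nash d x /\ zfrac R x = k%:R / n%:R).
Proof.
have n0 : (0 : R) < n%:R by rewrite ltr0n; case: (n) hn.
have nn0 : (n%:R : R) != 0 by rewrite gt_eqF.
split.
  move=> x /nashP Hx eps e0 e1.
  have [ne0 ne1] := @eps_bound R n hn eps e0 e1.
  rewrite /Fc /zfrac; congr (_%:R / _); apply: eq_card => i; rewrite !inE thrP //.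
  have := Hx i; case: (x i) => h.
    by apply/esym/idP; lra.
  by apply/esym/negbTE; rewrite -ltNge; lra.
move=> k hk H.
set c : R := 2 * k%:R - n%:R - 1.
have cardA : #|[set i | d i <= c]| = k.
  have := H n%:R^-1 (ltac:(by rewrite invr_gt0)) (lexx _).
  rewrite /Fc => /(congr1 (fun z => z * n%:R)); rewrite !mulfVK // => /eqP.
  rewrite eqr_nat => /eqP ->; apply: eq_card => i; rewrite !inE thrP // mulfV //.
  by rewrite /c; congr (_ <= _); ring.
have gap : forall i, c < d i -> c + 2 <= d i.
  move=> i ci; rewrite leNgt; apply/negP => ci2.
  set eps := (c + 2 - d i) / (2 * n%:R).
  have e0 : 0 < eps by rewrite divr_gt0 // ?mulr_gt0 //; lra.
  have e1 : eps <= n%:R^-1.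
    rewrite /eps ler_pdivrMr ?mulr_gt0 // mulrCA mulVf // mulr1; lra.
  have hb : 2 * (k%:R - n%:R * eps) - (n%:R - 1) = d i.
    by rewrite /eps /c; field; rewrite nn0.
  have := H eps e0 e1.
  rewrite /Fc => /(congr1 (fun z => z * n%:R)); rewrite !mulfVK // => /eqP.
  rewrite eqr_nat => /eqP E.
  have : [set j | d j <= c] \proper [set j | threshold d j <= n%:R / (n%:R - 1) * (k%:R / n%:R - eps)].
    apply/properP; split.
      by apply/subsetP => j; rewrite !inE thrP // hb => hj; lra.
    by exists i; rewrite !inE ?thrP // ?hb; lra.
  by move/proper_card; rewrite -E cardA ltnn.
exists [ffun i => d i <= c]; split.
  apply/nashP => i; rewrite ffunE.
  have -> : #|[set i0 | [ffun i => d i <= c] i0]| = k.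
    by rewrite -cardA; apply: eq_card => j; rewrite !inE ffunE.
  case: ifP => h; first by rewrite /c.
  have := gap i; rewrite ltNge h /c => /(_ isT); lra.
by rewrite /zfrac -cardA; congr (_%:R / _); apply: eq_card => j; rewrite !inE ffunE.
Qed.
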